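(* (i) We have $$\sum_{k=0}^\infty\frac{(49k+1)8^k}{3^k\binom{3k}k}=81+16\sqrt3\,\pi.$$ (ii) Let $c=\frac32\left((1+\sqrt2)^{1/3}-(1+\sqrt2)^{-1/3}\right)$, so $1/c=1.11843\cdots$. If $n$ is a real number with $n<-1/3$ or $n>1/c$, then $$\sum_{k=0}^\infty\frac{a_nk-b_n}{((1-n)n^2)^k\binom{3k}k}=3n^2(n-1)\left(4\log\left(1-\frac1n\right)-9(3n^2-6n+1)\right),$$ where $$a_n=(3n+1)(3n-2)^2(9n^2-12n+1),\qquad b_n=81n^5-243n^4+189n^3-69n^2+48n-2.$$ In particular, \begin{align*} \sum_{k=0}^\infty\frac{275k-158}{2^k\binom{3k}k}&=6\log2-135,\\ \sum_{k=0}^\infty\frac{728k-17}{(-4)^k\binom{3k}k}&=-54-24\log2,\\ \sum_{k=0}^\infty\frac{(1813k-2707)8^k}{3^k\binom{3k}k}&=9(16\log3-171),\\ \sum_{k=0}^\infty\frac{5635k-1156}{(-18)^k\binom{3k}k}&=54\log\frac23-1215,\\ \sum_{k=0}^\infty\frac{63050k-15959}{(-48)^k\binom{3k}k}&=72\left(4\log\frac34-225\right),\\ \sum_{k=0}^\infty\frac{112216k-30847}{(-100)^k\binom{3k}k}&=300\log\frac45-31050,\\ \sum_{k=0}^\infty\frac{615296k-176777}{(-180)^k\binom{3k}k}&=270\left(4\log\frac56-657\right),\\ \sum_{k=0}^\infty\frac{710809k-209926}{(-294)^k\binom{3k}k}&=441\left(2\log\frac67-477\right),\\ \sum_{k=0}^\infty\frac{2910050k-875807}{(-448)^k\binom{3k}k}&=672\left(4\log\frac78-1305\right),\\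 \sum_{k=0}^\infty\frac{2721250k-830317}{(-648)^k\binom{3k}k}&=972\left(2\log\frac89-855\right),\\ \sum_{k=0}^\infty\frac{9490712k-2926289}{(-900)^k\binom{3k}k}&=1350\left(4\log\frac9{10}-2169\right),\\ \sum_{k=0}^\infty\frac{7825423k-2432776}{(-1210)^k\binom{3k}k}&=1815\left(2\log\frac{10}{11}-1341\right). \end{align*}
   Context: $\log$ is the natural logarithm. *)

(* Defs.v *)
From Stdlib Require Import Reals.
From Coquelicot Require Import Coquelicot.
Open Scope R_scope.

Definition binom3 (k : nat) : R := Binomial.C (3 * k)%nat k.

Definition c_const : R :=
  3 / 2 * (Rpower (1 + sqrt 2) (1 / 3) - Rpower (1 + sqrt 2) (- (1 / 3))).

Definition a_n (n : R) : R :=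
  (3 * n + 1) * (3 * n - 2) ^ 2 * (9 * n ^ 2 - 12 * n + 1).

Definition b_n (n : R) : R :=
  81 * n ^ 5 - 243 * n ^ 4 + 189 * n ^ 3 - 69 * n ^ 2 + 48 * n - 2.

(* Main.v *)
Require Import Defs.
From Stdlib Require Import Reals.
From Coquelicot Require Import Coquelicot.
From Stdlib Require Import Lra Lia Arith Factorial.
Open Scope R_scope.
Lemma RInt_R_minus (f g : R -> R) a b If Ig :
  is_RInt f a b If -> is_RInt g a b Ig -> is_RInt (fun t => f t - g t) a b (If - Ig).
Proof. intros H1 H2. exact (is_RInt_minus f g a b If Ig H1 H2). Qed.

Lemma RInt_R_plus (f g : R -> R) a b If Ig :
  is_RInt f a b If -> is_RInt g a b Ig -> is_RInt (fun t => f t + g t) a b (If + Ig).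
Proof. intros H1 H2. exact (is_RInt_plus f g a b If Ig H1 H2). Qed.

Lemma RInt_R_scal (f : R -> R) a b k If :
  is_RInt f a b If -> is_RInt (fun t => k * f t) a b (k * If).
Proof. intros H1. exact (is_RInt_scal f a b k If H1). Qed.

Lemma int_pow p : is_RInt (fun t => t ^ p) 0 1 (/ INR (S p)).
Proof.
  assert (HS : INR (S p) <> 0) by (apply not_0_INR; lia).
  replace (/ INR (S p)) with (1 ^ S p / INR (S p) - 0 ^ S p / INR (S p))
    by (rewrite pow1, pow_i by lia; field; auto).
  apply (is_RInt_derive (fun t => t ^ S p / INR (S p))).
  - intros y _. auto_derive; auto.
    simpl pred. field. auto.
  - intros y _. apply (@ex_derive_continuous R_AbsRing R_NormedModule). auto_derive. auto.
Qed.

Definition Bv (p r : nat) : R := INR (fact p) * INR (fact r) / INR (fact (p + r + 1)).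

Lemma beta r : forall p, is_RInt (fun t => t ^ p * (1 - t) ^ r) 0 1 (Bv p r).
Proof.
  induction r as [|r IH]; intros p.
  - unfold Bv. replace (INR (fact p) * INR (fact 0) / INR (fact (p + 0 + 1))) with (/ INR (S p)).
    + apply (is_RInt_ext (fun t => t ^ p)). intros; simpl; ring. apply int_pow.
    + replace (p + 0 + 1)%nat with (S p) by lia. change (fact 0) with 1%nat. rewrite fact_simpl, mult_INR.
      change (INR 1) with 1. field. split; [apply INR_fact_neq_0| apply not_0_INR; lia].
  - replace (Bv p (S r)) with (Bv p r - Bv (S p) r).
    + apply (is_RInt_ext (fun t => t ^ p * (1 - t) ^ r - t ^ (S p) * (1 - t) ^ r)).
      intros; simpl; ring. apply RInt_R_minus; auto.
    + unfold Bv. replace (S p + r + 1)%nat with (S (p + r + 1)) by lia.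
      replace (p + S r + 1)%nat with (S (p + r + 1)) by lia.
      rewrite !fact_simpl, !mult_INR.
      replace (INR (S (p + r + 1))) with (INR (S p) + INR (S r)) by (rewrite <- plus_INR; f_equal; lia).
      rewrite !S_INR. field. split; [apply INR_fact_neq_0|]. 
      pose proof (pos_INR p); pose proof (pos_INR r); lra.
Qed.


Lemma binom3_inv k : / binom3 k = INR (3 * k + 1) * Bv k (2 * k).
Proof.
  unfold binom3, Binomial.C, Bv.
  replace (3 * k - k)%nat with (2 * k)%nat by lia.
  replace (k + 2 * k + 1)%nat with (S (3 * k)) by lia.
  rewrite fact_simpl, mult_INR. replace (3 * k + 1)%nat with (S (3 * k)) by lia.
  field. repeat split; try apply INR_fact_neq_0. apply not_0_INR; lia.
Qed.
Definition fq (al be ga : R) (k : nat) : R := al * INR k ^ 2 + be * INR k + ga.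

Definition Gt (al be ga x : R) (N : nat) : R :=
  x ^ N * (al * x * (1 + x) / (1 - x) ^ 3 + (2 * al * INR N + be) * x / (1 - x) ^ 2
           + fq al be ga N / (1 - x)).

Lemma psum_closed al be ga x N : x <> 1 ->
  sum_n (fun k => fq al be ga k * x ^ k) N = Gt al be ga x 0 - Gt al be ga x (S N).
Proof.
  intros Hx. assert (H1 : 1 - x <> 0) by lra.
  induction N as [|N IH].
  - rewrite sum_O. unfold Gt, fq. rewrite !S_INR. simpl INR. apply Rminus_diag_uniq. field. auto.
  - rewrite sum_Sn, IH. change plus with Rplus. unfold Gt, fq. rewrite !S_INR. simpl pow. apply Rminus_diag_uniq. field. auto.
Qed.

Definition Mb (al be ga rho : R) (N : nat) : R :=
  Rabs al * 2 / (1 - rho) ^ 3 + (2 * Rabs al * INR N + Rabs be) / (1 - rho) ^ 2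
  + (Rabs al * INR N ^ 2 + Rabs be * INR N + Rabs ga) / (1 - rho).

Lemma div_le_aux c C d e : 0 < e <= d -> Rabs c <= C -> Rabs (c / d) <= C / e.
Proof.
  intros [He Hd] Hc. unfold Rdiv. rewrite Rabs_mult, Rabs_inv, (Rabs_pos_eq d) by lra.
  apply Rmult_le_compat; try apply Rabs_pos; auto.
  left; apply Rinv_0_lt_compat; lra. apply Rinv_le_contravar; lra.
Qed.

Lemma Gt_bound al be ga x rho N : 0 <= rho < 1 -> Rabs x <= rho ->
  Rabs (Gt al be ga x N) <= rho ^ N * Mb al be ga rho N.
Proof.
  intros [Hr0 Hr1] Hx.
  pose proof (Rabs_le_between' x 0 rho) as Hb.
  assert (Hxb : - rho <= x <= rho) by (apply Rabs_le_between; auto).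
  assert (He : 0 < 1 - rho <= 1 - x) by lra.
  assert (Hpk : forall k, 0 < (1 - rho) ^ k <= (1 - x) ^ k).
  { intros k; split. apply pow_lt; lra. apply pow_incr; lra. }
  pose proof (pos_INR N) as HN.
  unfold Gt, Mb. rewrite Rabs_mult. apply Rmult_le_compat; try apply Rabs_pos.
  - rewrite <- RPow_abs. apply pow_incr. split; auto. apply Rabs_pos.
  - eapply Rle_trans. apply Rabs_triang.
    apply Rplus_le_compat. eapply Rle_trans. apply Rabs_triang. apply Rplus_le_compat.
    + apply div_le_aux. apply Hpk. rewrite !Rabs_mult.
      rewrite Rmult_assoc. apply Rmult_le_compat_l. apply Rabs_pos.
      assert (Rabs (1 + x) <= 2) by (apply Rabs_le; lra).
      assert (Rabs x <= 1) by lra.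
      apply Rle_trans with (1 * 2); [|lra]. apply Rmult_le_compat; auto; apply Rabs_pos.
    + apply div_le_aux. apply Hpk. rewrite Rabs_mult.
      replace (2 * Rabs al * INR N + Rabs be) with ((2 * Rabs al * INR N + Rabs be) * 1) by ring.
      apply Rmult_le_compat; try apply Rabs_pos; [|lra].
      eapply Rle_trans. apply Rabs_triang. rewrite !Rabs_mult, (Rabs_pos_eq 2), (Rabs_pos_eq (INR N)) by lra. lra.
    + apply div_le_aux. apply He. unfold fq.
      eapply Rle_trans. apply Rabs_triang. eapply Rle_trans. apply Rplus_le_compat_r. apply Rabs_triang.
      rewrite !Rabs_mult, (Rabs_pos_eq (INR N ^ 2)), (Rabs_pos_eq (INR N)) by (try apply pow_le; lra). lra.
Qed.

Lemma lim_inv_n1 : is_lim_seq (fun n => / (INR n + 1)) 0.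
Proof.
  replace (Finite 0) with (Rbar_inv p_infty) by reflexivity.
  apply is_lim_seq_inv.
  apply is_lim_seq_plus with p_infty 1. apply is_lim_seq_INR. apply is_lim_seq_const.
  first [reflexivity | simpl; auto | compute; auto]. discriminate.
Qed.

Lemma lim_poly_geom rho : 0 < rho < 1 -> is_lim_seq (fun n => (INR n + 1) ^ 2 * rho ^ n) 0.
Proof.
  intros Hr.
  assert (Hpos : forall n, 0 < (INR n + 1) ^ 2 * rho ^ n).
  { intros n. pose proof (pos_INR n). apply Rmult_lt_0_compat. apply pow_lt; lra. apply pow_lt; lra. }
  assert (Hex : ex_series (fun n => Rabs ((INR n + 1) ^ 2 * rho ^ n))).
  { apply ex_series_DAlembert with rho. lra.
    intros n. specialize (Hpos n). lra.
    apply is_lim_seq_ext with (fun n => rho * (1 + / (INR n + 1)) ^ 2).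
    - intros n. pose proof (pos_INR n). rewrite Rabs_pos_eq.
      rewrite S_INR. simpl pow. field. split. apply pow_nonzero; lra. lra.
      apply Rlt_le, Rdiv_lt_0_compat; apply Hpos.
    - replace (Finite rho) with (Finite (rho * (1 + 0) ^ 2)) by (f_equal; ring).
      apply is_lim_seq_mult'. apply is_lim_seq_const.
      simpl pow. apply is_lim_seq_mult'. apply is_lim_seq_plus'. apply is_lim_seq_const.
      apply lim_inv_n1. apply is_lim_seq_mult'. apply is_lim_seq_plus'. apply is_lim_seq_const. apply lim_inv_n1. apply is_lim_seq_const. }
  apply ex_series_lim_0 in Hex.
  apply is_lim_seq_ext with (2 := Hex). intros n. apply Rabs_pos_eq. left; apply Hpos.
Qed.

Lemma Mb_lim al be ga rho : 0 < rho < 1 -> is_lim_seq (fun N => rho ^ N * Mb al be ga rho N) 0.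
Proof.
  intros Hr.
  set (e := 1 - rho).
  assert (He : 0 < e <= 1) by (unfold e; lra).
  assert (He3 : 0 < e ^ 3) by (apply pow_lt; lra).
  assert (Hee : e ^ 3 <= e ^ 2 /\ e ^ 2 <= e).
  { simpl. split; nra. }
  set (K := (5 * Rabs al + 2 * Rabs be + Rabs ga) / e ^ 3).
  apply is_lim_seq_le_le with (fun _ => 0) (fun N => K * ((INR N + 1) ^ 2 * rho ^ N)).
  - intros N. pose proof (pos_INR N) as HN.
    assert (Hp : 0 <= rho ^ N) by (apply pow_le; lra).
    pose proof (Rabs_pos al); pose proof (Rabs_pos be); pose proof (Rabs_pos ga).
    assert (HM0 : 0 <= Mb al be ga rho N).
    { unfold Mb. fold e. apply Rplus_le_le_0_compat. apply Rplus_le_le_0_compat.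
      all: apply Rdiv_le_0_compat; try apply pow_lt; try nra. }
    split. apply Rmult_le_pos; auto.
    replace (K * ((INR N + 1) ^ 2 * rho ^ N)) with (rho ^ N * (K * (INR N + 1) ^ 2)) by ring.
    apply Rmult_le_compat_l; auto.
    unfold Mb, K. fold e.
    assert (A1 : forall c j, 0 <= c -> 0 < e ^ j -> e ^ 3 <= e ^ j -> c / e ^ j <= c / e ^ 3).
    { intros c j Hc Hj Hj3. apply Rmult_le_compat_l; auto. apply Rinv_le_contravar; auto. }
    assert (B2 : (2 * Rabs al * INR N + Rabs be) / e ^ 2 <= (2 * Rabs al * INR N + Rabs be) / e ^ 3).
    { apply A1. nra. apply pow_lt; lra. tauto. }
    assert (B3 : (Rabs al * INR N ^ 2 + Rabs be * INR N + Rabs ga) / e <= (Rabs al * INR N ^ 2 + Rabs be * INR N + Rabs ga) / e ^ 3).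
    { replace e with (e ^ 1) at 1 by ring. apply A1. simpl; nra. simpl; lra. simpl; simpl in Hee; lra. }
    eapply Rle_trans. apply Rplus_le_compat. apply Rplus_le_compat. apply Rle_refl. exact B2. exact B3.
    assert (D3 : forall u v, u <= v -> u / e ^ 3 <= v / e ^ 3).
    { intros u v Huv. apply Rmult_le_compat_r; auto. left; apply Rinv_0_lt_compat; auto. }
    replace (Rabs al * 2 / e ^ 3 + (2 * Rabs al * INR N + Rabs be) / e ^ 3 +
      (Rabs al * INR N ^ 2 + Rabs be * INR N + Rabs ga) / e ^ 3) with
      ((Rabs al * 2 + (2 * Rabs al * INR N + Rabs be) + (Rabs al * INR N ^ 2 + Rabs be * INR N + Rabs ga)) / e ^ 3)
      by (field; lra).
    replace ((5 * Rabs al + 2 * Rabs be + Rabs ga) / e ^ 3 * (INR N + 1) ^ 2) with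
      (((5 * Rabs al + 2 * Rabs be + Rabs ga) * (INR N + 1) ^ 2) / e ^ 3) by (field; lra).
    apply D3. simpl. nra.
  - apply is_lim_seq_const.
  - replace (Finite 0) with (Rbar_mult K 0) by (simpl; f_equal; ring).
    apply is_lim_seq_scal_l. apply lim_poly_geom; auto.
Qed.

Definition wq (q t : R) : R := t * (1 - t) ^ 2 / q.
Definition gI (q a b t : R) : R :=
  3 * a * wq q t * (1 + wq q t) / (1 - wq q t) ^ 3 + (a - 3 * b) * wq q t / (1 - wq q t) ^ 2
  - b / (1 - wq q t).

Lemma wq_bound q t : 4 / 27 < Rabs q -> 0 <= t <= 1 -> Rabs (wq q t) <= 4 / (27 * Rabs q).
Proof.
  intros Hq Ht. unfold wq. unfold Rdiv. rewrite Rabs_mult, Rabs_inv.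
  assert (Hq0 : 0 < Rabs q) by lra.
  rewrite Rabs_pos_eq by (apply Rmult_le_pos; [lra| apply pow2_ge_0]).
  replace (4 * / (27 * Rabs q)) with (4 / 27 * / Rabs q) by (field; lra).
  apply Rmult_le_compat_r. left; apply Rinv_0_lt_compat; lra.
  assert (0 <= (t - 1/3) ^ 2 * (4/3 - t)) by (apply Rmult_le_pos; [apply pow2_ge_0| lra]).
  simpl in *. nra.
Qed.

Lemma main_series q a b (F : R -> R) V :
  4 / 27 < Rabs q ->
  (forall t, 0 <= t <= 1 -> is_derive F t (gI q a b t)) ->
  F 1 - F 0 = V ->
  is_series (fun k => (a * INR k - b) / (q ^ k * binom3 k)) V.
Proof.
  intros Hq HF HV.
  assert (Hq0 : 0 < Rabs q) by lra.
  assert (Hqn : q <> 0) by (intro E; rewrite E, Rabs_R0 in Hq0; lra).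
  set (rho := 4 / (27 * Rabs q)).
  assert (Hrho : 0 < rho < 1).
  { unfold rho. split. apply Rdiv_lt_0_compat; lra.
    apply Rmult_lt_reg_r with (27 * Rabs q). lra. unfold Rdiv. rewrite Rmult_assoc, Rinv_l by lra. lra. }
  assert (Hw : forall t, 0 <= t <= 1 -> Rabs (wq q t) <= rho) by (intros; apply wq_bound; auto).
  assert (Hw1 : forall t, 0 <= t <= 1 -> 1 - wq q t <> 0).
  { intros t Ht. specialize (Hw t Ht). apply Rabs_le_between in Hw. lra. }
  set (al := 3 * a). set (be := a - 3 * b). set (ga := - b).
  assert (Hg : forall t, 0 <= t <= 1 -> gI q a b t = Gt al be ga (wq q t) 0).
  { intros t Ht. specialize (Hw1 t Ht). unfold gI, Gt, fq, al, be, ga. simpl INR. simpl pow. field. auto. }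
  assert (HI : is_RInt (gI q a b) 0 1 V).
  { rewrite <- HV. apply (is_RInt_derive F (gI q a b) 0 1).
    - rewrite Rmin_left, Rmax_right by lra. auto.
    - rewrite Rmin_left, Rmax_right by lra. intros t Ht.
      apply (@ex_derive_continuous R_AbsRing R_NormedModule).
      specialize (Hw1 t Ht). unfold gI in *. unfold wq in *. auto_derive. repeat split; first [exact Hqn | exact Hw1 | exact (pow_nonzero _ 2 Hw1) | exact (pow_nonzero _ 3 Hw1)]. }
  set (term := fun k : nat => (a * INR k - b) / (q ^ k * binom3 k)).
  assert (Hterm : forall k, is_RInt (fun t => fq al be ga k * wq q t ^ k) 0 1 (term k)).
  { intros k. unfold term.
    replace ((a * INR k - b) / (q ^ k * binom3 k)) with (fq al be ga k / q ^ k * Bv k (2 * k)).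
    - apply (is_RInt_ext (fun t => fq al be ga k / q ^ k * (t ^ k * (1 - t) ^ (2 * k)))).
      + intros t _. apply Rminus_diag_uniq. unfold wq. unfold Rdiv. rewrite !Rpow_mult_distr, pow_mult, pow_inv. ring.
      + apply RInt_R_scal. apply beta.
    - assert (Hb : binom3 k <> 0).
      { intro E. pose proof (binom3_inv k) as Hi. rewrite E, Rinv_0 in Hi.
        assert (0 < INR (3 * k + 1) * Bv k (2 * k)); [|lra].
        apply Rmult_lt_0_compat. apply lt_0_INR; lia.
        unfold Bv. apply Rdiv_lt_0_compat. apply Rmult_lt_0_compat; apply lt_0_INR, lt_O_fact.
        apply lt_0_INR, lt_O_fact. }
      assert (Hqk : q ^ k <> 0) by (apply pow_nonzero; auto).
      replace (Bv k (2 * k)) with (/ binom3 k / INR (3 * k + 1)).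
      + unfold fq, al, be, ga. rewrite plus_INR, mult_INR. simpl INR. field. 
        repeat split; auto. pose proof (pos_INR k). lra.
      + pose proof (binom3_inv k) as Hi. rewrite Hi. field. apply not_0_INR; lia. }
  assert (Hpart : forall N, is_RInt (fun t => sum_n (fun k => fq al be ga k * wq q t ^ k) N) 0 1 (sum_n term N)).
  { induction N as [|N IH].
    - apply (is_RInt_ext (fun t => fq al be ga 0 * wq q t ^ 0)).
      intros; rewrite sum_O; reflexivity. rewrite sum_O. apply Hterm.
    - apply (is_RInt_ext (fun t => sum_n (fun k => fq al be ga k * wq q t ^ k) N + fq al be ga (S N) * wq q t ^ (S N))).
      intros; rewrite sum_Sn; reflexivity. rewrite sum_Sn. apply RInt_R_plus; auto. }
  assert (Herr : forall N, is_RInt (fun t => Gt al be ga (wq q t) (S N)) 0 1 (V - sum_n term N)).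
  { intros N. apply (is_RInt_ext (fun t => gI q a b t - sum_n (fun k => fq al be ga k * wq q t ^ k) N)).
    - rewrite Rmin_left, Rmax_right by lra. intros t Ht.
      assert (Ht' : 0 <= t <= 1) by lra.
      rewrite psum_closed. rewrite Hg by auto. apply Rminus_diag_uniq. ring.
      specialize (Hw1 t Ht'). lra.
    - apply RInt_R_minus; auto. }
  assert (Hbd : forall N, Rabs (V - sum_n term N) <= rho ^ (S N) * Mb al be ga rho (S N)).
  { intros N. rewrite <- (is_RInt_unique _ _ _ _ (Herr N)).
    replace (rho ^ (S N) * Mb al be ga rho (S N)) with ((1 - 0) * (rho ^ (S N) * Mb al be ga rho (S N))) by ring.
    apply abs_RInt_le_const. lra. eexists; apply Herr.
    intros t Ht. apply Gt_bound. lra. apply Hw; auto. }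
  assert (Hlim : is_lim_seq (fun N => rho ^ (S N) * Mb al be ga rho (S N)) 0).
  { apply (is_lim_seq_incr_1 (fun N => rho ^ N * Mb al be ga rho N)). apply Mb_lim; auto. }
  assert (Hs : is_lim_seq (sum_n term) V).
  { apply is_lim_seq_le_le with (fun N => V - rho ^ (S N) * Mb al be ga rho (S N))
                                (fun N => V + rho ^ (S N) * Mb al be ga rho (S N)).
    - intros N. specialize (Hbd N). apply Rabs_le_between in Hbd. lra.
    - replace (Finite V) with (Finite (V - 0)) by (f_equal; ring).
      apply is_lim_seq_minus'. apply is_lim_seq_const. auto.
    - replace (Finite V) with (Finite (V + 0)) by (f_equal; ring).
      apply is_lim_seq_plus'. apply is_lim_seq_const. auto. }
  exact Hs.
Qed.

Definition Lf n t := 1 - n - t.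
Definition Qf n t := t ^ 2 - (1 + n) * t + n ^ 2.
Definition Apoly n t :=
  (-18*n^6+162*n^7-432*n^8+504*n^9-270*n^10+54*n^11)
  + (34*n^4-332*n^5+751*n^6-831*n^7+810*n^8-756*n^9+405*n^10-81*n^11) * t
  + (-4*n^2+16*n^3-136*n^4+1322*n^5-2974*n^6+2478*n^7-702*n^8) * t^2
  + (12*n^2-48*n^3+180*n^4-1584*n^5+3600*n^6-3024*n^7+864*n^8) * t^3
  + (-12*n^2+48*n^3-90*n^4+594*n^5-1350*n^6+1134*n^7-324*n^8) * t^4
  + (4*n^2-16*n^3+12*n^4) * t^5.
Definition Fgen n t := Apoly n t / (Lf n t ^ 2 * Qf n t ^ 2) + 4 * ((1 - n) * n ^ 2) * ln (Lf n t ^ 2 / Qf n t).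

Lemma Fgen_deriv n t : (1 - n) * n ^ 2 <> 0 -> Lf n t <> 0 -> 0 < Qf n t ->
  is_derive (Fgen n) t (gI ((1 - n) * n ^ 2) (a_n n) (b_n n) t).
Proof.
  intros Hq HL HQ.
  assert (HD : (1 - n) * n ^ 2 - t * (1 - t) ^ 2 = Lf n t * Qf n t) by (unfold Lf, Qf; ring).
  assert (HD0 : (1 - n) * n ^ 2 - t * (1 - t) ^ 2 <> 0).
  { rewrite HD. apply Rmult_integral_contrapositive. split; lra. }
  assert (Hpos : 0 < Lf n t ^ 2 / Qf n t).
  { apply Rdiv_lt_0_compat; auto. apply pow2_gt_0; auto. }
  unfold Fgen, Apoly. unfold Lf, Qf in *. auto_derive.
  - repeat split; auto.
    + apply Rmult_integral_contrapositive. split; apply (pow_nonzero _ 2); lra.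
    + lra.
  - unfold gI, wq, a_n, b_n. field.
    assert (n <> 0) by (intro E; apply Hq; rewrite E; ring).
    assert (1 - n <> 0) by (intro E; apply Hq; rewrite E; ring).
    repeat split; auto; intro E; apply HQ || apply HL; lra.
Qed.

Lemma Fgen_val n : (n < -1/3 \/ 1 < n) ->
  Fgen n 1 - Fgen n 0 = 3 * n ^ 2 * (n - 1) * (4 * ln (1 - 1 / n) - 9 * (3 * n ^ 2 - 6 * n + 1)).
Proof.
  intros Hn.
  assert (Hn0 : n <> 0) by lra. assert (Hn1 : n - 1 <> 0) by lra.
  set (r := 1 - 1 / n).
  assert (Hr : 0 < r).
  { unfold r. replace (1 - 1 / n) with ((n - 1) * n / (n * n)) by (field; auto).
    apply Rdiv_lt_0_compat. destruct Hn; nra. nra. }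
  unfold Fgen, Lf, Qf.
  replace ((1 - n - 1) ^ 2 / (1 ^ 2 - (1 + n) * 1 + n ^ 2)) with (/ r). 2:{ unfold r. field. repeat split; auto. intro E. destruct Hn; nra. }
  replace ((1 - n - 0) ^ 2 / (0 ^ 2 - (1 + n) * 0 + n ^ 2)) with (r * r) by (unfold r; field; auto).
  rewrite ln_Rinv, ln_mult by auto.
  unfold Apoly. field. repeat split; intro E; destruct Hn; nra.
Qed.

Lemma c_facts : 0 < c_const < 1 /\ 4 * c_const ^ 3 + 27 * c_const - 27 = 0.
Proof.
  set (x := 1 + sqrt 2).
  assert (Hs2 : sqrt 2 * sqrt 2 = 2) by (apply sqrt_sqrt; lra).
  assert (Hs2p : 1 < sqrt 2).
  { rewrite <- sqrt_1. apply sqrt_lt_1; lra. }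
  assert (Hx : 0 < x) by (unfold x; lra).
  set (y := Rpower x (1 / 3)).
  assert (Hy0 : 0 < y) by (unfold y, Rpower; apply exp_pos).
  assert (Hy3 : y ^ 3 = x).
  { unfold y. rewrite <- Rpower_pow by (unfold Rpower; apply exp_pos).
    rewrite Rpower_mult. replace (1 / 3 * INR 3) with 1 by (simpl; field). apply Rpower_1; auto. }
  assert (Hyi : Rpower x (- (1 / 3)) = / y) by (unfold y; apply Rpower_Ropp).
  unfold c_const. fold x. fold y. rewrite Hyi.
  set (s := y - / y).
  assert (Hy1 : 1 < y).
  { destruct (Rle_lt_dec y 1) as [H|H]; auto.
    assert (y ^ 3 <= 1). { replace 1 with (1 ^ 3) by ring. apply pow_incr; lra. }
    unfold x in Hy3; lra. }
  assert (Hs3 : s ^ 3 + 3 * s - 2 = 0).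
  { unfold s. assert (Hxinv : / x = sqrt 2 - 1).
    { unfold x. field_simplify_eq. 2: lra. 
      replace ((sqrt 2 - 1) * (1 + sqrt 2)) with (sqrt 2 * sqrt 2 - 1) by ring. lra. }
    assert (/ y ^ 3 = sqrt 2 - 1) by (rewrite Hy3; auto).
    replace ((y - / y) ^ 3 + 3 * (y - / y) - 2) with (y ^ 3 - / y ^ 3 - 2) by (field; lra).
    rewrite H, Hy3. unfold x. ring. }
  assert (Hs0 : 0 < s).
  { unfold s. assert (/ y < 1). { rewrite <- Rinv_1. apply Rinv_lt_contravar; lra. } lra. }
  split; [split|].
  - lra.
  - assert (s < 2 / 3) by nra. lra.
  - replace (4 * (3 / 2 * s) ^ 3 + 27 * (3 / 2 * s) - 27) with (27 / 2 * (s ^ 3 + 3 * s - 2)) by field.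
    rewrite Hs3. ring.
Qed.

Lemma gen_series n : n < - (1 / 3) \/ n > 1 / c_const ->
  is_series (fun k : nat => (a_n n * INR k - b_n n) / (((1 - n) * n ^ 2) ^ k * binom3 k))
    (3 * n ^ 2 * (n - 1) * (4 * ln (1 - 1 / n) - 9 * (3 * n ^ 2 - 6 * n + 1))).
Proof.
  intros Hn.
  destruct c_facts as [[Hc0 Hc1] Hc].
  set (m := 1 / c_const) in *.
  assert (Hm1 : 1 < m).
  { unfold m. apply Rmult_lt_reg_r with c_const; auto. unfold Rdiv. rewrite Rmult_assoc, Rinv_l by lra. lra. }
  assert (Hm3 : (m - 1) * m ^ 2 = 4 / 27).
  { unfold m. field_simplify_eq. 2: lra. nra. }
  assert (Hn' : n < - (1 / 3) \/ 1 < n) by lra.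
  assert (Hq : 4 / 27 < Rabs ((1 - n) * n ^ 2)).
  { destruct Hn as [Hn|Hn].
    - assert (0 < (1 - n) * n ^ 2) by (apply Rmult_lt_0_compat; [lra| apply pow2_gt_0; lra]).
      rewrite Rabs_pos_eq by lra.
      assert (0 < - (n + 1/3) * (n - 2/3) ^ 2) by (apply Rmult_lt_0_compat; [lra| apply pow2_gt_0; lra]).
      simpl in *. nra.
    - assert ((1 - n) * n ^ 2 < 0).
      { replace ((1 - n) * n ^ 2) with (- ((n - 1) * n ^ 2)) by ring.
        assert (0 < (n - 1) * n ^ 2) by (apply Rmult_lt_0_compat; [lra| apply pow2_gt_0; lra]). lra. }
      rewrite Rabs_left by lra.
      assert (0 < (n - m) * (n ^ 2 + n * m + m ^ 2 - n - m)).
      { apply Rmult_lt_0_compat. lra. nra. }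
      simpl in *. nra. }
  assert (Hq0 : (1 - n) * n ^ 2 <> 0).
  { intro E. rewrite E, Rabs_R0 in Hq. lra. }
  apply main_series with (Fgen n).
  - exact Hq.
  - intros t Ht. apply Fgen_deriv; auto.
    + unfold Lf. destruct Hn'; lra.
    + unfold Qf. assert (0 < (3 * n + 1) * (n - 1)) by (destruct Hn'; nra).
      assert (0 <= (2 * t - 1 - n) ^ 2) by apply pow2_ge_0.
      simpl in *. nra.
  - apply Fgen_val. lra.
Qed.

Definition Ai (t : R) := -243/32 + 1737/64 * t - 159/4 * t ^ 2 + 72 * t ^ 3 - 72 * t ^ 4 + 24 * t ^ 5.
Definition Li (t : R) := 3 / 2 - t.
Definition Qi (t : R) := t ^ 2 - t / 2 + 1 / 4.
Definition Fi (t : R) := Ai t / (Li t ^ 2 * Qi t ^ 2) + 32 * sqrt 3 * atan ((4 * t - 1) / sqrt 3).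

Lemma Fi_deriv t : 0 <= t <= 1 -> is_derive Fi t (gI (3 / 8) 49 (-1) t).
Proof.
  intros Ht.
  assert (Hs0 : 0 < sqrt 3) by (apply sqrt_lt_R0; lra).
  assert (Hs2 : sqrt 3 ^ 2 = 3) by (apply pow2_sqrt; lra).
  set (s := sqrt 3) in *.
  assert (HL : Li t <> 0) by (unfold Li; lra).
  assert (HQ : 0 < Qi t) by (unfold Qi; nra).
  assert (H2 : is_derive (fun x => atan ((4 * x - 1) / s)) t (4 / s * / (1 + ((4 * t - 1) / s) ^ 2))).
  { apply (is_derive_comp atan (fun x => (4 * x - 1) / s) t (/ (1 + ((4 * t - 1) / s) ^ 2)) (4 / s)).
    apply is_derive_Reals, derivable_pt_lim_atan.
    auto_derive. lra. field. lra. }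
  evar (d1 : R).
  assert (H1 : is_derive (fun x => Ai x / (Li x ^ 2 * Qi x ^ 2)) t d1).
  { unfold Ai, Li, Qi in *. auto_derive.
    - repeat split. apply Rmult_integral_contrapositive; split; apply (pow_nonzero _ 2); lra.
    - unfold d1. reflexivity. }
  pose proof (is_derive_plus _ _ t _ _ H1 (is_derive_scal _ t (32 * s) _ H2)) as H.
  unfold Fi. fold s.
  replace (gI (3 / 8) 49 (-1) t) with (plus d1 (32 * s * (4 / s * / (1 + ((4 * t - 1) / s) ^ 2)))).
  exact H.
  unfold d1. change plus with Rplus.
  replace (((4 * t - 1) / s) ^ 2) with ((4 * t - 1) ^ 2 / 3).
  2:{ unfold Rdiv. rewrite Rpow_mult_distr, pow_inv, Hs2. reflexivity. }
  unfold gI, wq in *. unfold Li, Qi in *. apply Rminus_diag_uniq. field.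
  assert (0 <= (t - 1/3) ^ 2 * (4/3 - t)) by (apply Rmult_le_pos; [apply pow2_ge_0| lra]).
  assert (0 <= (4 * t - 1) ^ 2) by apply pow2_ge_0.
  repeat split; try lra; simpl in *; nra.
Qed.

Lemma Fi_val : Fi 1 - Fi 0 = 81 + 16 * sqrt 3 * PI.
Proof.
  assert (Hs0 : 0 < sqrt 3) by (apply sqrt_lt_R0; lra).
  assert (Hs2 : sqrt 3 * sqrt 3 = 3) by (apply sqrt_sqrt; lra).
  pose proof PI_RGT_0 as Hpi.
  unfold Fi.
  replace ((4 * 1 - 1) / sqrt 3) with (tan (PI / 3)).
  2:{ rewrite tan_PI3. field_simplify_eq; try lra. }
  replace ((4 * 0 - 1) / sqrt 3) with (- tan (PI / 6)).
  2:{ rewrite tan_PI6. field. lra. }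
  rewrite atan_opp, !atan_tan by lra.
  unfold Ai, Li, Qi. field.
Qed.

Lemma binom3_nz k : binom3 k <> 0.
Proof.
  intro E. pose proof (binom3_inv k) as Hi. rewrite E, Rinv_0 in Hi.
  assert (0 < INR (3 * k + 1) * Bv k (2 * k)); [|lra].
  apply Rmult_lt_0_compat. apply lt_0_INR; lia.
  unfold Bv. apply Rdiv_lt_0_compat. apply Rmult_lt_0_compat; apply lt_0_INR, lt_O_fact.
  apply lt_0_INR, lt_O_fact.
Qed.

Lemma pow38 (X : R) k : X / ((3 / 8) ^ k * binom3 k) = X * 8 ^ k / (3 ^ k * binom3 k).
Proof.
  pose proof (binom3_nz k).
  assert (3 ^ k <> 0) by (apply pow_nonzero; lra).
  assert (8 ^ k <> 0) by (apply pow_nonzero; lra).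
  replace ((3 / 8) ^ k) with (3 ^ k / 8 ^ k) by (unfold Rdiv; rewrite Rpow_mult_distr, pow_inv; auto).
  field. auto.
Qed.

Lemma spec (n lam A B Q V : R) : (n < - (1 / 3) \/ n > 1 / c_const) ->
  (1 - n) * n ^ 2 = Q -> a_n n = lam * A -> b_n n = lam * B -> lam <> 0 ->
  3 * n ^ 2 * (n - 1) * (4 * ln (1 - 1 / n) - 9 * (3 * n ^ 2 - 6 * n + 1)) = lam * V ->
  is_series (fun k => (A * INR k - B) / (Q ^ k * binom3 k)) V.
Proof.
  intros Hn HQ Ha Hb Hl HV.
  pose proof (gen_series n Hn) as G.
  apply is_series_scal with (c := / lam) in G.
  rewrite HV in G. 
  assert (HQ0 : Q <> 0).
  { intro E. rewrite <- HQ in E. destruct Hn as [Hn|Hn].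
    - assert (0 < (1 - n) * n ^ 2) by (apply Rmult_lt_0_compat; [lra| apply pow2_gt_0; lra]). lra.
    - destruct c_facts as [[Hc0 Hc1] _].
      assert (1 < 1 / c_const).
      { apply Rmult_lt_reg_r with c_const; auto. unfold Rdiv. rewrite Rmult_assoc, Rinv_l by lra. lra. }
      assert (0 < (n - 1) * n ^ 2) by (apply Rmult_lt_0_compat; [lra| apply pow2_gt_0; lra]). nra. }
  replace V with (scal (/ lam) (lam * V)) by (unfold scal; simpl; unfold mult; simpl; field; auto).
  revert G. apply is_series_ext. intros k.
  rewrite HQ, Ha, Hb. unfold scal; simpl; unfold mult; simpl.
  pose proof (binom3_nz k). assert (Q ^ k <> 0) by (apply pow_nonzero; auto).
  field. auto.
Qed.

Lemma inv_c_lt2 : 1 / c_const < 2.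
Proof.
  destruct c_facts as [[Hc0 Hc1] Hc].
  assert (1 / 2 < c_const) by nra.
  apply Rmult_lt_reg_r with c_const; auto. unfold Rdiv. rewrite Rmult_assoc, Rinv_l by lra. lra.
Qed.

Theorem corollary1p1 :
  (* (i) *)
  is_series (fun k : nat => (49 * INR k + 1) * 8 ^ k / (3 ^ k * binom3 k))
    (81 + 16 * sqrt 3 * PI)
  /\
  (* (ii) general identity *)
  (forall n : R, n < - (1 / 3) \/ n > 1 / c_const ->
     is_series
       (fun k : nat => (a_n n * INR k - b_n n) / (((1 - n) * n ^ 2) ^ k * binom3 k))
       (3 * n ^ 2 * (n - 1) * (4 * ln (1 - 1 / n) - 9 * (3 * n ^ 2 - 6 * n + 1))))
  /\
  (* (ii) particular cases *)
  is_series (fun k : nat => (275 * INR k - 158) / (2 ^ k * binom3 k))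
    (6 * ln 2 - 135)
  /\ is_series (fun k : nat => (728 * INR k - 17) / ((-4) ^ k * binom3 k))
    (-54 - 24 * ln 2)
  /\ is_series (fun k : nat => (1813 * INR k - 2707) * 8 ^ k / (3 ^ k * binom3 k))
    (9 * (16 * ln 3 - 171))
  /\ is_series (fun k : nat => (5635 * INR k - 1156) / ((-18) ^ k * binom3 k))
    (54 * ln (2 / 3) - 1215)
  /\ is_series (fun k : nat => (63050 * INR k - 15959) / ((-48) ^ k * binom3 k))
    (72 * (4 * ln (3 / 4) - 225))
  /\ is_series (fun k : nat => (112216 * INR k - 30847) / ((-100) ^ k * binom3 k))
    (300 * ln (4 / 5) - 31050)
  /\ is_series (fun k : nat => (615296 * INR k - 176777) / ((-180) ^ k * binom3 k))
    (270 * (4 * ln (5 / 6) - 657))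
  /\ is_series (fun k : nat => (710809 * INR k - 209926) / ((-294) ^ k * binom3 k))
    (441 * (2 * ln (6 / 7) - 477))
  /\ is_series (fun k : nat => (2910050 * INR k - 875807) / ((-448) ^ k * binom3 k))
    (672 * (4 * ln (7 / 8) - 1305))
  /\ is_series (fun k : nat => (2721250 * INR k - 830317) / ((-648) ^ k * binom3 k))
    (972 * (2 * ln (8 / 9) - 855))
  /\ is_series (fun k : nat => (9490712 * INR k - 2926289) / ((-900) ^ k * binom3 k))
    (1350 * (4 * ln (9 / 10) - 2169))
  /\ is_series (fun k : nat => (7825423 * INR k - 2432776) / ((-1210) ^ k * binom3 k))
    (1815 * (2 * ln (10 / 11) - 1341)).
Proof.
  assert (Hp3 : forall n, n >= 3 -> n > 1 / c_const) by (intros; pose proof inv_c_lt2; lra).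
  split.
  { apply (is_series_ext (fun k => (49 * INR k - -1) / ((3 / 8) ^ k * binom3 k))).
    { intros k. rewrite pow38. f_equal. f_equal. ring. }
    apply main_series with Fi.
    - rewrite Rabs_pos_eq; lra.
    - apply Fi_deriv.
    - apply Fi_val. }
  split. { exact gen_series. }
  split.
  { apply (spec (-1) (-4) 275 158 2); [left; lra | ring | unfold a_n; ring | unfold b_n; ring | lra | ].
    replace (1 - 1 / -1) with 2 by field. field. }
  split.
  { apply (spec 2 2 728 17 (-4)); [right; pose proof inv_c_lt2; lra | ring | unfold a_n; ring | unfold b_n; ring | lra | ].
    replace (1 - 1 / 2) with (/ 2) by field. rewrite ln_Rinv by lra. field. }
  split.
  { apply (is_series_ext (fun k => (1813 * INR k - 2707) / ((3 / 8) ^ k * binom3 k))).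
    { intros k. apply pow38. }
    apply (spec (-1/2) (-1/32) 1813 2707 (3/8)); [left; lra | field | unfold a_n; field | unfold b_n; field | lra | ].
    replace (1 - 1 / (-1/2)) with 3 by field. field. }
  split.
  { apply (spec 3 4 5635 1156 (-18)); [right; apply Hp3; lra | ring | unfold a_n; ring | unfold b_n; ring | lra | ].
    replace (1 - 1 / 3) with (2 / 3) by field. field. }
  split.
  { apply (spec 4 2 63050 15959 (-48)); [right; apply Hp3; lra | ring | unfold a_n; ring | unfold b_n; ring | lra | ].
    replace (1 - 1 / 4) with (3 / 4) by field. field. }
  split.
  { apply (spec 5 4 112216 30847 (-100)); [right; apply Hp3; lra | ring | unfold a_n; ring | unfold b_n; ring | lra | ].
    replace (1 - 1 / 5) with (4 / 5) by field. field. }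
  split.
  { apply (spec 6 2 615296 176777 (-180)); [right; apply Hp3; lra | ring | unfold a_n; ring | unfold b_n; ring | lra | ].
    replace (1 - 1 / 6) with (5 / 6) by field. field. }
  split.
  { apply (spec 7 4 710809 209926 (-294)); [right; apply Hp3; lra | ring | unfold a_n; ring | unfold b_n; ring | lra | ].
    replace (1 - 1 / 7) with (6 / 7) by field. field. }
  split.
  { apply (spec 8 2 2910050 875807 (-448)); [right; apply Hp3; lra | ring | unfold a_n; ring | unfold b_n; ring | lra | ].
    replace (1 - 1 / 8) with (7 / 8) by field. field. }
  split.
  { apply (spec 9 4 2721250 830317 (-648)); [right; apply Hp3; lra | ring | unfold a_n; ring | unfold b_n; ring | lra | ].
    replace (1 - 1 / 9) with (8 / 9) by field. field. }
  split.
  { apply (spec 10 2 9490712 2926289 (-900)); [right; apply Hp3; lra | ring | unfold a_n; ring | unfold b_n; ring | lra | ].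
    replace (1 - 1 / 10) with (9 / 10) by field. field. }
  apply (spec 11 4 7825423 2432776 (-1210)); [right; apply Hp3; lra | ring | unfold a_n; ring | unfold b_n; ring | lra | ].
    replace (1 - 1 / 11) with (10 / 11) by field. field.
Qed.
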